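(* Assume (A) holds. There exists a constant $c>0$ depending only on the data of (A) such that for every $T>0$, all $t\in[-T,T]$ and all $\mathbf{p}\in\mathbb{R}^N$: $$\int_0^1\int_{\mathbb{S}^{d-1}}|\langle\mathbb{M}_t\mathbf{p},e^{vA}B\sigma\mathbf{s}\rangle|^\alpha\mu(d\mathbf{s})\,dv\ge c|\mathbb{M}_t\mathbf{p}|^\alpha.$$
   Context: Setting: $1\le d<N$, $n\ge1$, $d_1=d\ge\dots\ge d_n>0$, $N=\sum_id_i$; $\alpha\in(0,2)$; $\mu$ is the spectral measure on $\mathbb{S}^{d-1}$ of a symmetric $\alpha$-stable Lévy measure on $\mathbb{R}^d$. Assumption (A): (UE) $\sigma\in\mathbb{R}^{d\times d}$ with $\kappa^{-1}|x|^2\le\langle\sigma\sigma^*x,x\rangle\le\kappa|x|^2$; (ND) $\eta^{-1}|\lambda|^\alpha\le\int_{\mathbb{S}^{d-1}}|\langle\lambda,s\rangle|^\alpha\mu(ds)\le\eta|\lambda|^\alpha$ for all $\lambda\in\mathbb{R}^d$; (H) $A\in\mathbb{R}^{N\times N}$ is a block matrix whose only nonzero blocks are $A_{i,i-1}\in\mathbb{R}^{d_i\times d_{i-1}}$, $i=2,\dots,n$, each of rank $d_i$. $B=(I_{d\times d},0,\dots,0)^T\in\mathbb{R}^{N\times d}$. $\mathbb{M}_t=\mathrm{diag}(I_{d_1\times d_1},tI_{d_2\times d_2},\dots,t^{n-1}I_{d_n\times d_n})$. *)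

(* Defs.v *)
From HB Require Import structures.
From mathcomp Require Import all_boot all_order all_algebra.
From mathcomp Require Import all_classical all_reals all_analysis.
Set Implicit Arguments. Unset Strict Implicit. Unset Printing Implicit Defensive.
Import Order.TTheory GRing.Theory Num.Theory.
Import numFieldNormedType.Exports.
Local Open Scope classical_set_scope.
Local Open Scope ring_scope.

Section defs.
Variable R : realType.

Definition dotv m (x y : 'cV[R]_m) : R := \sum_(k < m) x k 0 * y k 0.
Definition enorm m (x : 'cV[R]_m) : R := Num.sqrt (dotv x x).

(** A d-tuple (the measurable model of R^d, with the product = Borel
    sigma-algebra) seen as a column vector. *)
Definition tup2cv d (s : d.-tuple R) : 'cV[R]_d := \col_k tnth s k.

Definition usphere d : set (d.-tuple R) := [set s | enorm (tup2cv s) = 1].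

Definition expmx N (M : 'M[R]_N) : 'M[R]_N :=
  limn (fun m : nat => \sum_(k < m) (k`!%:R)^-1 *: M ^+ k).

Definition blockA n (dd : 'I_n -> nat) (Ab : forall i j, 'M[R]_(dd i, dd j))
  : 'M[R]_(\sum_i dd i) := \mxblock_(i < n, j < n) Ab i j.

Definition Bmx n (dd : 'I_n.+1 -> nat) : 'M[R]_(\sum_i dd i, dd ord0) :=
  \matrix_(k, l) ((k : nat) == (l : nat))%:R.

Definition Mt n (dd : 'I_n -> nat) (t : R) : 'M[R]_(\sum_i dd i) :=
  \mxdiag_(i < n) ((t ^+ i)%:M : 'M[R]_(dd i)).

End defs.
Arguments usphere {R} d.
Arguments Bmx {R n} dd.
Arguments Mt {R n} dd t.

(* Main.v *)
Require Import Defs.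
From HB Require Import structures.
From mathcomp Require Import all_boot all_order all_algebra.
From mathcomp Require Import all_classical all_reals all_analysis.
From mathcomp Require Import ring lra.
Import Order.TTheory GRing.Theory Num.Theory.
Import numFieldNormedType.Exports.
Local Open Scope classical_set_scope.
Local Open Scope ring_scope.

Section Aux.
Variable R : realType.

Lemma dotvE m (x y : 'cV[R]_m) : dotv x y = (x^T *m y) 0 0.
Proof. by rewrite /dotv mxE; apply: eq_bigr => k _; rewrite mxE. Qed.

Lemma dotvC m (x y : 'cV[R]_m) : dotv x y = dotv y x.
Proof. by rewrite /dotv; apply: eq_bigr => k _; rewrite mulrC. Qed.

Lemma dotv_mul m p (M : 'M[R]_(m, p)) x y : dotv x (M *m y) = dotv (M^T *m x) y.
Proof. by rewrite !dotvE trmx_mul trmxK mulmxA. Qed.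

Lemma dotv_ge0 m (x : 'cV[R]_m) : 0 <= dotv x x.
Proof. by apply: sumr_ge0 => k _; rewrite -expr2 sqr_ge0. Qed.

Lemma enorm_ge0 m (x : 'cV[R]_m) : 0 <= enorm x.
Proof. exact: sqrtr_ge0. Qed.

Lemma enorm_sqr m (x : 'cV[R]_m) : enorm x ^+ 2 = dotv x x.
Proof. by rewrite /enorm sqr_sqrtr // dotv_ge0. Qed.

Lemma dotv_eq0 m (x : 'cV[R]_m) : dotv x x = 0 -> x = 0.
Proof.
move=> /eqP; rewrite /dotv psumr_eq0 => [/allP H|k _]; last by rewrite -expr2 sqr_ge0.
apply/matrixP => k l; rewrite ord1 mxE.
have := H k (mem_index_enum _); rewrite implyTb -expr2 sqrf_eq0.
by move/eqP.
Qed.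

Lemma entry_le_enorm m (x : 'cV[R]_m) k : `|x k 0| <= enorm x.
Proof.
rewrite /enorm -sqrtr_sqr ler_wsqrtr //.
rewrite /dotv (bigD1 k) //= -expr2 lerDl.
by apply: sumr_ge0 => i _; rewrite -expr2 sqr_ge0.
Qed.

Lemma enorm_le_l1 m (x : 'cV[R]_m) : enorm x <= \sum_k `|x k 0|.
Proof.
have h0 : 0 <= \sum_k `|x k 0| by apply: sumr_ge0.
rewrite /enorm -(ger0_norm h0) -sqrtr_sqr ler_wsqrtr // /dotv.
pose P (a b : R) := a <= b ^+ 2 /\ 0 <= b.
suff [] : P (\sum_(k < m) x k 0 * x k 0) (\sum_k `|x k 0|) by [].
apply: (big_rec2 P) => [|k a b _ [IH hb]]; first by split; rewrite ?expr0n.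
split; last by rewrite addr_ge0.
rewrite sqrrD -expr2 real_normK ?num_real //.
have : 0 <= `|x k 0| * b *+ 2 by rewrite mulrn_wge0 // mulr_ge0.
lra.
Qed.

Lemma det_le1 m (M : 'M[R]_m) : (forall a b, `|M a b| <= 1) -> `|\det M| <= m`!%:R.
Proof.
move=> H; rewrite /determinant; apply: (le_trans (ler_norm_sum _ _ _)).
rewrite -perm.card_Sn -sumr_const.
apply: ler_sum => s _; rewrite normrM normrX normrN1 expr1n mul1r normr_prod.
by apply: prodr_ile1 => i _; rewrite normr_ge0 H.
Qed.
Definition D0 n (h : R) := \prod_(i < n.+1) \prod_(j < n.+1 | (i < j)%N) h.

Lemma D0_gt0 n (h : R) : 0 < h -> 0 < D0 n h.
Proof. by move=> h0; apply: prodr_gt0 => i _; apply: prodr_gt0. Qed.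

Lemma interp n d (h : R) (x : 'I_n.+1 -> R) :
  0 < h -> (forall j, 0 <= x j <= 1) ->
  (forall i j : 'I_n.+1, (i < j)%N -> h <= x j - x i) ->
  forall W : 'M[R]_(d, n.+1),
  D0 n h * \sum_i \sum_k `|W i k| <=
    (d * n.+1)%:R * n`!%:R * \sum_j enorm (W *m \col_k (x j ^+ k)).
Proof.
move=> h0 x01 xsep W.
set V := Vandermonde n.+1 (\row_j x j).
have detV : D0 n h <= \det V.
  rewrite det_Vandermonde /D0; apply: ler_prod => i _; apply/andP; split.
    by apply: prodr_ge0 => j _; rewrite ltW.
  apply: ler_prod => j ij; apply/andP; split; first exact: ltW.
  rewrite !mxE; exact: xsep.
have key i k : \det V * W i k = \sum_j (W *m V) i j * \adj V j k.
  have := esym (mulmxA W V (\adj V)).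
  rewrite mul_mx_adj mul_mx_scalar => /matrixP /(_ i k).
  by rewrite !mxE => ->.
have adjb j k : `|\adj V j k| <= n`!%:R.
  rewrite mxE /cofactor normrM normrX normrN1 expr1n mul1r.
  apply: det_le1 => a b; rewrite !mxE.
  have /andP[x0 x1] := x01 (lift j b).
  by rewrite ger0_norm ?exprn_ge0 // exprn_ile1.
have WVe i j : `|(W *m V) i j| <= enorm (W *m \col_k (x j ^+ k)).
  have -> : (W *m V) i j = (W *m \col_k (x j ^+ k)) i 0.
    by rewrite !mxE; apply: eq_bigr => k _; rewrite !mxE.
  exact: entry_le_enorm.
set E := \sum_j enorm (W *m \col_k (x j ^+ k)).
have Hik i k : D0 n h * `|W i k| <= n`!%:R * E.
  apply: le_trans (_ : \det V * `|W i k| <= _).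
    by rewrite ler_wpM2r.
  rewrite -(ger0_norm (le_trans (ltW (@D0_gt0 n h h0)) detV)) -normrM key.
  apply: (le_trans (ler_norm_sum _ _ _)); rewrite /E mulr_sumr.
  apply: ler_sum => j _; rewrite normrM mulrC.
  apply: ler_pM => //.
rewrite mulr_sumr; apply: le_trans (_ : \sum_(i < d) \sum_(k < n.+1) (n`!%:R * E) <= _).
  apply: ler_sum => i _; rewrite mulr_sumr; apply: ler_sum => k _; exact: Hik.
rewrite !sumr_const !card_ord le_eqVlt; apply/orP; left; apply/eqP.
by rewrite -mulrnA -(mulr_natl (n`!%:R * E)) mulnC mulrA.
Qed.


Section Blocks.
Variables (n : nat) (dd : 'I_n.+1 -> nat) (Ab : forall i j : 'I_n.+1, 'M[R]_(dd i, dd j)).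
Hypothesis H0 : forall i j : 'I_n.+1, (i : nat) <> j.+1 -> Ab i j = 0.
Local Notation N := (\sum_i dd i)%N.
Local Notation At := (blockA Ab)^T.

Lemma At_block (x : 'cV[R]_N) i :
  submxcol (At *m x) i = \sum_j (Ab j i)^T *m submxcol x j.
Proof. by rewrite /blockA tr_mxblock -{1}(submxcolK x) mul_mxblock_mxrow mxcolK. Qed.

Lemma At_block_succ (x : 'cV[R]_N) (i j : 'I_n.+1) : (j : nat) = i.+1 ->
  submxcol (At *m x) i = (Ab j i)^T *m submxcol x j.
Proof.
move=> hij; rewrite At_block (bigD1 j) //= big1 ?addr0 // => k hk.
rewrite H0 ?trmx0 ?mul0mx // => hk'; move: hk; rewrite -val_eqE /= hij hk'.
by rewrite eqxx.
Qed.

Lemma At_block_last (x : 'cV[R]_N) (i : 'I_n.+1) : (i : nat) = n ->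
  submxcol (At *m x) i = 0.
Proof.
move=> hi; rewrite At_block big1 // => k _.
rewrite H0 ?trmx0 ?mul0mx // => hk; have := ltn_ord k; rewrite hk.
by rewrite ltnS hi ltnn.
Qed.

Lemma Bmx_sub (x : 'cV[R]_N) : (Bmx dd)^T *m x = submxcol x ord0.
Proof.
apply/matrixP => k l; set r := @tagnat.Rank n.+1 dd ord0 k.
have hR : (r : nat) = k.
  by rewrite tagnat.RankEsum big_pred0 // => i; rewrite ltn0.
rewrite !mxE (bigD1 r) //= [X in _ + X]big1 => [|m hm].
  rewrite !mxE; have -> : ((r : nat) == k) = true by rewrite hR eqxx.
  by rewrite mul1r addr0.
rewrite !mxE.
case: eqP => [hmk|]; last by rewrite mul0r.
have hmr : m = r by apply: val_inj; exact: (etrans hmk (esym hR)).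
by rewrite hmr eqxx in hm.
Qed.

Lemma At_pow_block k (x : 'cV[R]_N) (i : 'I_n.+1) : (n < i + k)%N ->
  submxcol (At ^+ k *m x) i = 0.
Proof.
elim: k x i => [|k IH] x i hik.
  by move: hik; rewrite addn0 ltnNge -ltnS ltn_ord.
rewrite exprS -mulmxE -mulmxA.
have [hin|hin] := eqVneq (i : nat) n; first exact: At_block_last.
have hi1 : (i.+1 < n.+1)%N by rewrite ltnS ltn_neqAle hin -ltnS ltn_ord.
rewrite (At_block_succ _ i (inord i.+1)) ?inordK //.
by rewrite IH ?mulmx0 // inordK // addSn -addnS.
Qed.

Lemma cV_eq0 (y : 'cV[R]_N) : (forall i, submxcol y i = 0) -> y = 0.
Proof.
move=> Hy; rewrite -(submxcolK y).
by rewrite (eq_mxcol (fun i => Hy i)) mxcol0.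
Qed.

Lemma mx_eq0 m (M : 'M[R]_(m, N)) : (forall x : 'cV[R]_N, M *m x = 0) -> M = 0.
Proof.
move=> H; apply/matrixP => a b; have := H (delta_mx b 0); rewrite -colE.
by move/matrixP/(_ a 0); rewrite !mxE.
Qed.

Lemma At_nil : At ^+ n.+1 = 0.
Proof.
apply: mx_eq0 => x; apply: cV_eq0 => i; rewrite At_pow_block ?submxcol0 //.
by rewrite addnS ltnS leq_addl.
Qed.

Hypothesis Hr : forall i j : 'I_n.+1, (i : nat) = j.+1 -> \rank (Ab i j) = dd i.

Lemma Abt_inj (i j : 'I_n.+1) (z : 'cV[R]_(dd i)) : (i : nat) = j.+1 ->
  (Ab i j)^T *m z = 0 -> z = 0.
Proof.
move=> hij hz; have hf : row_free (Ab i j) by rewrite /row_free Hr.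
apply: trmx_inj; rewrite trmx0; apply: (row_free_inj hf).
by rewrite mul0mx -(trmxK (Ab i j)) -trmx_mul hz trmx0.
Qed.

Lemma At_inj k (x : 'cV[R]_N) :
  (forall m, (m <= k)%N -> (Bmx dd)^T *m (At ^+ m *m x) = 0) ->
  forall i : 'I_n.+1, (i <= k)%N -> submxcol x i = 0.
Proof.
elim: k x => [|k IH] x H i hik.
  have -> : i = ord0 by apply: val_inj; apply/eqP; rewrite -leqn0.
  by have := H 0%N (leq0n _); rewrite expr0 mul1mx Bmx_sub.
have HA : forall i' : 'I_n.+1, (i' <= k)%N -> submxcol (At *m x) i' = 0.
  apply: IH => m hm; rewrite (mulmxA (At ^+ m)) -[At ^+ m *m At]/(At ^+ m * At) -exprSr; apply: H.
  by rewrite ltnS.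
case: (posnP i) => [hi0|hi0].
  have -> : i = ord0 by apply: val_inj.
  by have := H 0%N (leq0n _); rewrite expr0 mul1mx Bmx_sub.
have hi' : (i.-1 < n.+1)%N by apply: leq_ltn_trans (leq_pred _) (ltn_ord i).
have hii : (i : nat) = (inord i.-1 : 'I_n.+1).+1 by rewrite inordK // prednK.
apply: (@Abt_inj i (inord i.-1) (submxcol x i) hii).
rewrite -At_block_succ //; apply: HA.
by rewrite inordK // -ltnS prednK.
Qed.

Lemma At_inj_full (x : 'cV[R]_N) :
  (forall m, (m <= n)%N -> (Bmx dd)^T *m (At ^+ m *m x) = 0) -> x = 0.
Proof. by move=> H; apply: cV_eq0 => i; apply: (@At_inj n x H i); rewrite -ltnS ltn_ord. Qed.

End Blocks.


Lemma expmx_nil N (M : 'M[R]_N) k : M ^+ k = 0 ->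
  expmx M = \sum_(j < k) (j`!%:R)^-1 *: M ^+ j.
Proof.
move=> hk; rewrite /expmx; apply: norm_lim_near_cst.
exists k => // m /= hkm.
rewrite -!(big_mkord xpredT (fun j => (j`!%:R)^-1 *: M ^+ j)).
rewrite (big_cat_nat (leq0n k) hkm) /= [X in _ + X]big_nat_cond [X in _ + X]big1 ?addr0 //.
move=> j /andP[/andP[hj _] _]; rewrite -(subnKC hj) exprD hk mul0r scaler0 //.
Qed.


Lemma trmxX N (M : 'M[R]_N) k : (M ^+ k)^T = M^T ^+ k.
Proof.
elim: k => [|k IH]; first by rewrite !expr0 trmx1.
by rewrite exprS -[M * _]/(M *m _) trmx_mul IH exprSr.
Qed.

Lemma exprZmx N (M : 'M[R]_N) (a : R) k : (a *: M) ^+ k = a ^+ k *: M ^+ k.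
Proof.
elim: k => [|k IH]; first by rewrite !expr0 scale1r.
rewrite !exprS -[(a *: M) * _]/((a *: M) *m _) -[M * _]/(M *m _) IH.
by rewrite -scalemxAl -scalemxAr scalerA.
Qed.

Section Wsec.
Variables (n : nat) (dd : 'I_n.+1 -> nat) (Ab : forall i j : 'I_n.+1, 'M[R]_(dd i, dd j)).
Hypothesis H0 : forall i j : 'I_n.+1, (i : nat) <> j.+1 -> Ab i j = 0.
Local Notation N := (\sum_i dd i)%N.
Local Notation A := (blockA Ab).
Local Notation At := (blockA Ab)^T.
Variable sigma : 'M[R]_(dd ord0).

Definition Wmx (q : 'cV[R]_N) : 'M[R]_(dd ord0, n.+1) :=
  \matrix_(i, k) ((k`!%:R)^-1 * ((sigma^T *m (Bmx dd)^T *m At ^+ k *m q) i 0)).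

Lemma A_nil : A ^+ n.+1 = 0.
Proof. by apply: trmx_inj; rewrite trmxX trmx0 At_nil. Qed.

Lemma g_formula (q : 'cV[R]_N) (v : R) :
  (expmx (v *: A) *m Bmx dd *m sigma)^T *m q = Wmx q *m \col_k (v ^+ k).
Proof.
have hnil : (v *: A) ^+ n.+1 = 0 by rewrite exprZmx A_nil scaler0.
rewrite (@expmx_nil _ _ _ hnil) !trmx_mul !mulmxA.
have -> : (\sum_(j < n.+1) j`!%:R^-1 *: (v *: A) ^+ j)^T =
    \sum_(j < n.+1) (j`!%:R^-1 * v ^+ j) *: At ^+ j.
  apply/matrixP => a b; rewrite !mxE !summxE; apply: eq_bigr => j _.
  by rewrite exprZmx -trmxX !mxE mulrA.
rewrite mulmx_sumr mulmx_suml.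
apply/matrixP => i l; rewrite ord1 !mxE summxE; apply: eq_bigr => k _.
rewrite -scalemxAr -scalemxAl !mxE.
by rewrite -!mulrA [v ^+ k * _]mulrC.
Qed.



Hypothesis Hr : forall i j : 'I_n.+1, (i : nat) = j.+1 -> \rank (Ab i j) = dd i.
Variable kappa : R.
Hypothesis kappa0 : 0 < kappa.
Hypothesis UE : forall x : 'cV[R]_(dd ord0),
  kappa^-1 * enorm x ^+ 2 <= dotv (sigma *m sigma^T *m x) x.

Lemma W_inj (q : 'cV[R]_N) : Wmx q = 0 -> q = 0.
Proof.
move=> hW; apply: (@At_inj_full _ _ _ H0 Hr) => m hm.
set y := (Bmx dd)^T *m (At ^+ m *m q).
have hs : sigma^T *m y = 0.
  apply/matrixP => i l; rewrite ord1 /y !mulmxA [RHS]mxE.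
  have /matrixP /(_ i (inord m)) := hW; rewrite !mxE inordK //.
  move=> /eqP; rewrite mulf_eq0 invr_eq0 pnatr_eq0 eqn0Ngt fact_gt0 /=.
  by move/eqP.
have := UE y; rewrite dotvC -mulmxA dotv_mul hs.
rewrite /dotv big1 => [|k _]; last by rewrite mxE mul0r.
move=> hle; apply: dotv_eq0; rewrite -enorm_sqr.
have ki : 0 < kappa^-1 by rewrite invr_gt0.
by apply/eqP; rewrite eq_le sqr_ge0 andbT -(pmulr_rle0 _ ki).
Qed.



Lemma S_bound : exists C1 : R, 0 < C1 /\ forall q : 'cV[R]_N,
  enorm q <= C1 * \sum_i \sum_k `|Wmx q i k|.
Proof.
pose P := ('I_(dd ord0) * 'I_n.+1)%type.
pose Mb : 'M[R]_(#|{: P}|, N) := \matrix_(m, l)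
  (let p := (enum_val m : P) in
   ((p.2)`!%:R)^-1 * (sigma^T *m (Bmx dd)^T *m At ^+ p.2) p.1 l).
have MbE (q : 'cV[R]_N) m : (Mb *m q) m 0 = Wmx q (enum_val m : P).1 (enum_val m : P).2.
  by rewrite !mxE mulr_sumr; apply: eq_bigr => l _; rewrite !mxE /= !mxE mulrA.
have Mbinj (q : 'cV[R]_N) : Mb *m q = 0 -> q = 0.
  move=> hq; apply: W_inj; apply/matrixP => i k.
  have := MbE q (enum_rank ((i, k) : P)); rewrite enum_rankK /= hq !mxE.
  by move=> <-.
have hf : row_free Mb^T.
  apply: inj_row_free => v hv; apply: trmx_inj; rewrite trmx0; apply: Mbinj.
  by rewrite -(trmxK Mb) -trmx_mul hv trmx0.
have [L hL] := row_freeP hf.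
have hL' : L^T *m Mb = 1%:M by rewrite -(trmxK Mb) -trmx_mul hL trmx1.
pose Ls := \sum_a \sum_m `|L^T a m|.
exists (Ls + 1); split.
  by rewrite ltr_pwDr // /Ls; apply: sumr_ge0 => a _; apply: sumr_ge0.
move=> q; set Y := \sum_i \sum_k _.
have Y0 : 0 <= Y by apply: sumr_ge0 => i _; apply: sumr_ge0.
have YE : Y = \sum_m `|(Mb *m q) m 0|.
  rewrite /Y pair_big /=.
  under [RHS]eq_bigr do rewrite MbE.
  rewrite -(big_enum_val (A := {: P}) (fun p : P => `|Wmx q p.1 p.2|)).
  by apply: eq_bigl => p.
have hq : q = L^T *m (Mb *m q) by rewrite mulmxA hL' mul1mx.
apply: (le_trans (@enorm_le_l1 _ q)); rewrite mulrDl mul1r.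
apply: (@le_trans _ _ (Ls * Y)); last by rewrite lerDl.
rewrite /Ls mulr_suml; apply: ler_sum => a _.
rewrite {1}hq mxE; apply: (le_trans (ler_norm_sum _ _ _)).
rewrite mulr_suml; apply: ler_sum => m _; rewrite normrM ler_wpM2l //.
rewrite YE (bigD1 m) //= lerDl; apply: sumr_ge0 => m' _; exact: normr_ge0.
Qed.

End Wsec.


Lemma le_integral_nm d (T : measurableType d) (mu : measure T R) (D : set T)
  (f1 f2 : T -> \bar R) :
  (forall x, D x -> (0 <= f1 x)%E) -> (forall x, D x -> (f1 x <= f2 x)%E) ->
  (\int[mu]_(x in D) f1 x <= \int[mu]_(x in D) f2 x)%E.
Proof.
move=> f10 f12.
have f20 x : D x -> (0 <= f2 x)%E by move=> Dx; apply: le_trans (f10 x Dx) (f12 x Dx).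
rewrite (ge0_integralE _ f10) (ge0_integralE _ f20) /=.
apply: le_ereal_sup => _ [h hh <-]; exists h => // x.
apply: le_trans (hh x) _; rewrite /patch; case: ifP => // /set_mem Dx.
exact: f12.
Qed.

Lemma lower_int (F : R -> \bar R) (a b c : R) : 0 <= a -> a < b -> b <= 1 -> 0 <= c ->
  (forall v, 0 <= v <= 1 -> (0 <= F v)%E) ->
  (forall v, a <= v <= b -> (c%:E <= F v)%E) ->
  ((c * (b - a))%:E <= \int[@lebesgue_measure R]_(v in `[0%R, 1%R]%classic) F v)%E.
Proof.
move=> a0 ab b1 c0 F0 Fc.
have mJ : measurable (`[a, b]%classic : set R) by [].
have mI : measurable (`[0%R, 1%R]%classic : set R) by [].
apply: (@le_trans _ _ (\int[@lebesgue_measure R]_(v in `[0%R, 1%R]%classic)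
   (c * \1_(`[a, b]%classic) v)%:E)%E).
  have -> : (\int[@lebesgue_measure R]_(v in `[0%R, 1%R]%classic)
     (c * \1_(`[a, b]%classic) v)%:E =
     c%:E * \int[@lebesgue_measure R]_(v in `[0%R, 1%R]%classic)
     (\1_(`[a, b]%classic) v)%:E)%E.
    apply: (integralZl_indic (m := @lebesgue_measure R) mI (fun _ => `[a, b]%classic) c) => //.
    by move=> /lt_le_trans /(_ c0); rewrite ltxx.
  rewrite integral_indic // setIidl; last first.
    move=> v /=; rewrite !in_itv /= => /andP[av vb].
    by rewrite (le_trans a0 av) (le_trans vb b1).
  rewrite [X in (_ <= _ * X)%E](_ : _ = (b - a)%:E) ?EFinM //.
  by have := lebesgue_measure_itv `[a, b]; rewrite /= lte_fin ab /= EFinB => <-.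
apply: le_integral_nm.
  by move=> v _; rewrite lee_fin mulr_ge0.
move=> v v01; rewrite indicE.
have [vJ|vJ] := boolP (v \in (`[a, b]%classic : set R)).
  rewrite mulr1; apply: Fc; move: vJ; rewrite in_setE /= in_itv /=.
  by [].
rewrite mulr0; apply: F0; move: v01; rewrite /= in_itv /=.
by [].
Qed.


Lemma pigeon n (e : R -> R) (h S K : R) (a : 'I_n.+1 -> R) : 0 < K ->
  (forall x : 'I_n.+1 -> R, (forall j, a j <= x j <= a j + h) ->
     S <= K * \sum_j e (x j)) ->
  exists j, forall v, a j <= v <= a j + h -> S / (K * n.+1%:R) <= e v.
Proof.
move=> K0 HS; apply: contrapT => /forallNP hno.
have hx : forall j, exists v, a j <= v <= a j + h /\ e v < S / (K * n.+1%:R).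
  move=> j; have /existsNP [v /not_implyP [hv hlt]] := hno j.
  by exists v; split => //; rewrite ltNge; apply/negP.
have [x hxP] := choice hx.
have := HS x (fun j => (hxP j).1).
have : \sum_j e (x j) < \sum_(j < n.+1) S / (K * n.+1%:R).
  apply: ltr_sum => [|j _]; last exact: (hxP j).2.
  by apply/hasP; exists ord0; rewrite ?mem_index_enum.
rewrite sumr_const card_ord => hlt hle.
set t := S / (K * n.+1%:R) in hlt.
have ht : S = K * (t * n.+1%:R).
  have hn : (n.+1%:R : R) != 0 by rewrite pnatr_eq0.
  have hK : K != 0 by rewrite gt_eqF.
  rewrite /t; field.
  by rewrite addrC natr1 hn hK.
have : S < S.
  apply: le_lt_trans hle _; rewrite [X in _ < X]ht ltr_pM2l // mulr_natr //.
by rewrite ltxx.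
Qed.

End Aux.

Theorem lemmaA1 (R : realType) (n : nat) (dd : 'I_n.+1 -> nat)
  (alpha : R) (kappa eta : R)
  (mu : {finite_measure set (dd ord0).-tuple R -> \bar R})
  (sigma : 'M[R]_(dd ord0))
  (Ab : forall i j : 'I_n.+1, 'M[R]_(dd i, dd j)) :
  (* dimensions *)
  (1 <= dd ord0)%N ->
  (dd ord0 < \sum_i dd i)%N ->
  (forall i j : 'I_n.+1, (i <= j)%N -> (dd j <= dd i)%N) ->
  (forall i, (0 < dd i)%N) ->
  (* alpha in (0,2) *)
  0 < alpha < 2 ->
  (* mu : symmetric finite measure concentrated on the usphere S^{d-1} *)
  mu (~` usphere (dd ord0)) = 0%E ->
  (forall S : set ((dd ord0).-tuple R), measurable S ->
     mu [set s : (dd ord0).-tuple R | S (map_tuple (fun x : R => - x) s)] = mu S) ->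
  (* (UE) *)
  0 < kappa ->
  (forall x : 'cV[R]_(dd ord0),
     kappa^-1 * enorm x ^+ 2 <= dotv (sigma *m sigma^T *m x) x
     <= kappa * enorm x ^+ 2) ->
  (* (ND) *)
  0 < eta ->
  (forall lam : 'cV[R]_(dd ord0),
     ((eta^-1 * enorm lam `^ alpha)%:E
        <= \int[mu]_(s in usphere (dd ord0)) (`|dotv lam (tup2cv s)| `^ alpha)%:E)%E
     /\ (\int[mu]_(s in usphere (dd ord0)) (`|dotv lam (tup2cv s)| `^ alpha)%:E
        <= (eta * enorm lam `^ alpha)%:E)%E) ->
  (* (H) *)
  (forall i j : 'I_n.+1, (i : nat) <> j.+1 -> Ab i j = 0) ->
  (forall i j : 'I_n.+1, (i : nat) = j.+1 -> \rank (Ab i j) = dd i) ->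
  exists c : R, 0 < c /\
    forall T : R, 0 < T -> forall t : R, -T <= t <= T ->
    forall p : 'cV[R]_(\sum_i dd i),
      ((c * enorm (Mt dd t *m p) `^ alpha)%:E <=
       \int[@lebesgue_measure R]_(v in `[0%R, 1%R]%classic)
         \int[mu]_(s in usphere (dd ord0))
           (`| dotv (Mt dd t *m p)
                 (expmx (v *: blockA Ab) *m Bmx dd *m sigma *m tup2cv s) |
              `^ alpha)%:E)%E.
Proof.
move=> hd1 hdN hdec hdpos /andP[a0 a2] hmu hsym hk UE he ND H0 Hr.
have UE1 x : kappa^-1 * enorm x ^+ 2 <= dotv (sigma *m sigma^T *m x) x.
  by case/andP: (UE x).
have [C1 [C10 HC1]] := @S_bound R n dd Ab H0 sigma Hr kappa hk UE1.
pose h : R := ((2 * n).+1%:R)^-1.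
have h0 : 0 < h by rewrite invr_gt0 ltr0n.
pose a (j : 'I_n.+1) : R := (2 * j)%:R * h.
pose C2 : R := (dd ord0 * n.+1)%:R * n`!%:R / D0 R n h.
have C20 : 0 < C2.
  rewrite divr_gt0 ?D0_gt0 // mulr_gt0 // ltr0n ?fact_gt0 //.
  by rewrite muln_gt0 hd1.
pose K := C1 * (C2 * n.+1%:R).
have K0 : 0 < K by rewrite mulr_gt0 // mulr_gt0 // ltr0n.
pose c := eta^-1 * h / K `^ alpha.
have KA0 : 0 < K `^ alpha by rewrite powR_gt0.
exists c; split.
  by rewrite /c divr_gt0 // mulr_gt0 // invr_gt0.
move=> T T0 t ht p.
set q := Mt dd t *m p.
set W := Wmx R n dd Ab sigma q.
set S := \sum_i \sum_k `|W i k|.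
pose e v := enorm (W *m \col_k v ^+ k).
have hN1 : ((2 * n).+1%:R : R) != 0 by rewrite pnatr_eq0.
have ahE j : a j + h = ((2 * j).+1)%:R * h by rewrite /a -natr1 mulrDl mul1r.
have Hint : forall x : 'I_n.+1 -> R, (forall j, a j <= x j <= a j + h) ->
    S <= C2 * \sum_j e (x j).
  move=> x hx.
  have x01 j : 0 <= x j <= 1.
    have /andP[h1 h2] := hx j; apply/andP; split.
      by apply: le_trans h1; rewrite /a mulr_ge0 // ltW.
    apply: (le_trans h2); rewrite ahE /h ler_pdivrMr ?ltr0n // mul1r ler_nat.
    by rewrite ltnS leq_mul2l -ltnS ltn_ord orbT.
  have xsep (i j : 'I_n.+1) : (i < j)%N -> h <= x j - x i.
    move=> ij; have /andP[hj1 _] := hx j; have /andP[_ hi2] := hx i.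
    have : a i + 2 * h <= a j.
      rewrite /a -mulrDl; apply: (ler_wpM2r (ltW h0)).
      rewrite -(natrD _ (2 * i) 2) ler_nat.
      by rewrite -mulnSr leq_mul2l ij orbT.
    lra.
  have := @interp R n (dd ord0) h x h0 x01 xsep W.
  move=> H; rewrite /C2 mulrAC ler_pdivlMr ?D0_gt0 // mulrC.
  exact: H.
have [j hj] := @pigeon R n e h S C2 a C20 Hint.
set eps := S / (C2 * n.+1%:R) in hj.
have S0 : 0 <= S by apply: sumr_ge0 => i _; apply: sumr_ge0.
have eps0 : 0 <= eps by rewrite /eps divr_ge0 // mulr_ge0 // ltW.
have hn1 : (n.+1%:R : R) != 0 by rewrite pnatr_eq0.
have hq : enorm q <= K * eps.
  have -> : K * eps = C1 * S.
    rewrite /K /eps; field.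
    by rewrite addrC natr1 hn1 gt_eqF.
  exact: HC1.
have Fe v : (\int[mu]_(s in usphere (dd ord0))
    (`| dotv q (expmx (v *: blockA Ab) *m Bmx dd *m sigma *m tup2cv s) | `^ alpha)%:E
  = \int[mu]_(s in usphere (dd ord0))
    (`| dotv (W *m \col_k v ^+ k) (tup2cv s) | `^ alpha)%:E)%E.
  by apply: eq_integral => s _; rewrite dotv_mul (@g_formula R n dd Ab H0).
have aj0 : 0 <= a j by rewrite /a mulr_ge0 // ltW.
have ltab : a j < a j + h by rewrite ltrDl.
have hb1 : a j + h <= 1.
  rewrite ahE /h ler_pdivrMr ?ltr0n // mul1r ler_nat.
  by rewrite ltnS leq_mul2l -ltnS ltn_ord orbT.
have hc0 : 0 <= eta^-1 * eps `^ alpha.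
  by rewrite mulr_ge0 // ?powR_ge0 // invr_ge0 ltW.
pose F v := (\int[mu]_(s in usphere (dd ord0))
    (`| dotv q (expmx (v *: blockA Ab) *m Bmx dd *m sigma *m tup2cv s) | `^ alpha)%:E)%E.
have L := @lower_int R F (a j) (a j + h) (eta^-1 * eps `^ alpha) aj0 ltab hb1 hc0.
apply: (le_trans _ (L _ _)); rewrite /F.
- rewrite lee_fin addrC addKr.
  have c0 : 0 <= c by rewrite /c divr_ge0 ?mulr_ge0 ?invr_ge0 // ?ltW // powR_ge0.
  apply: (le_trans (ler_wpM2l c0 (ge0_ler_powR (ltW a0) _ _ hq))).
  + by rewrite nnegrE enorm_ge0.
  + by rewrite nnegrE mulr_ge0 // ltW.
  rewrite (powRM _ (ltW K0) eps0) le_eqVlt; apply/orP; left; apply/eqP.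
  rewrite /c; field.
  by rewrite !gt_eqF.
- move=> v _; apply: integral_ge0 => s _; rewrite lee_fin powR_ge0 //.
- move=> v hv; rewrite Fe; apply: le_trans (ND _).1.
  rewrite lee_fin; apply: ler_wpM2l; first by rewrite invr_ge0 ltW.
  apply: (ge0_ler_powR (ltW a0)); rewrite ?nnegrE ?enorm_ge0 //.
  exact: hj.
Qed.
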